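(* Let $G$ be a $B_2$-EPG graph given with a representation, let $a,b$ be two rows, and let $G_{ab}$ be the set of vertices of $G$ with index exactly $\{a,b\}$. Then the subgraph of $G$ induced by $G_{ab}$ is a $2$-track interval graph.
   Context: A graph $G$ is a $B_k$-EPG graph if each vertex $u$ can be assigned a path $P_u$ in the planar orthogonal grid with at most $k$ bends such that $uv\in E(G)$ iff $P_u$ and $P_v$ share at least one grid edge (a representation); for $B_2$-EPG graphs one assumes w.l.o.g. every path has exactly two bends. A vertex $u$ intersects a row if $P_u$ contains a grid edge of that row; the index of $u$ is the set of rows it intersects. A $2$-track interval is the union of two intervals lying on two distinct lines (tracks); a $2$-track interval graph is an intersection graph of $2$-track intervals with the same two tracks, i.e. the edge-union of two interval graphs on the same vertex set. *)

(* Defs.v *)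
From Stdlib Require Import ZArith Reals List.
Set Implicit Arguments.
Open Scope Z_scope.

(** Grid points and unit grid edges.  [HE x y] is the horizontal grid edge
    from (x,y) to (x+1,y) (it lies on row y); [VE x y] is the vertical grid
    edge from (x,y) to (x,y+1). *)
Definition point := (Z * Z)%type.
Inductive gedge : Type := HE (x y : Z) | VE (x y : Z).

Definition seg_has (p q : point) (e : gedge) : Prop :=
  match e with
  | HE x y => snd p = y /\ snd q = y /\
              Z.min (fst p) (fst q) <= x /\ x < Z.max (fst p) (fst q)
  | VE x y => fst p = x /\ fst q = x /\
              Z.min (snd p) (snd q) <= y /\ y < Z.max (snd p) (snd q)
  end.

(** A path is given by its list of corner points (start, bends, end). *)
Fixpoint path_has (l : list point) (e : gedge) : Prop :=
  match l with
  | p :: ((q :: _) as t) => seg_has p q e \/ path_has t e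
  | _ => False
  end.

Definition hseg (p q : point) : Prop := snd p = snd q /\ fst p <> fst q.
Definition vseg (p q : point) : Prop := fst p = fst q /\ snd p <> snd q.

(** Consecutive corners span nondegenerate horizontal/vertical segments,
    and consecutive segments are perpendicular (every inner corner is a bend). *)
Fixpoint segs_ok (l : list point) : Prop :=
  match l with
  | p :: ((q :: t') as t) =>
      (hseg p q \/ vseg p q) /\
      match t' with
      | r :: _ => (hseg p q <-> vseg q r)
      | nil => True
      end /\ segs_ok t
  | _ => True
  end.

(** A grid path with at most two bends: 2 to 4 corner points.  (Such paths
    are automatically simple.) *)
Definition B2_path (l : list point) : Prop :=
  (2 <= length l <= 4)%nat /\ segs_ok l.

Definition B2_EPG_rep (V : Type) (E : V -> V -> Prop) (P : V -> list point) : Prop :=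
  (forall u, B2_path (P u)) /\
  (forall u v, u <> v -> (E u v <-> exists e, path_has (P u) e /\ path_has (P v) e)).

Definition intersects_row (P : list point) (y : Z) : Prop :=
  exists x, path_has P (HE x y).
Definition index_is_pair (P : list point) (a b : Z) : Prop :=
  forall y, intersects_row P y <-> (y = a \/ y = b).

Definition interval_ok (I : R * R) : Prop := (fst I <= snd I)%R.
Definition intervals_meet (I J : R * R) : Prop :=
  exists t : R, (fst I <= t <= snd I)%R /\ (fst J <= t <= snd J)%R.

Definition two_track_interval_induced (V : Type) (E : V -> V -> Prop) (S : V -> Prop) : Prop :=
  exists I1 I2 : V -> R * R,
    (forall v, S v -> interval_ok (I1 v) /\ interval_ok (I2 v)) /\
    (forall u v, S u -> S v -> u <> v ->
       (E u v <-> intervals_meet (I1 u) (I1 v) \/ intervals_meet (I2 u) (I2 v))).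

(* Main.v *)
Require Import Defs.
From Stdlib Require Import ZArith Reals List Lia Lra.

Definition Dd (a b : Z) (d : Z * Z * Z) (e : gedge) : Prop :=
  let '(c, ta, tb) := d in
  match e with
  | HE x y => (y = a /\ Z.min c ta <= x < Z.max c ta) \/ (y = b /\ Z.min c tb <= x < Z.max c tb)
  | VE x y => x = c /\ Z.min a b <= y < Z.max a b
  end.

Definition desc (a : Z) (l : list point) : Z * Z * Z :=
  match l with
  | p :: q :: r :: s :: nil =>
      if Z.eq_dec (snd p) a then (fst q, fst p, fst s) else (fst q, fst s, fst p)
  | _ => (0, 0, 0)
  end.

Lemma key (l : list point) (a b : Z) : a <> b -> B2_path l -> index_is_pair l a b ->
  let '(c, ta, tb) := desc a l in
  ta <> c /\ tb <> c /\ forall e, path_has l e <-> Dd a b (c, ta, tb) e.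
Proof.
  intros hab [Hlen Hok] Hidx.
  destruct (proj2 (Hidx a) (or_introl eq_refl)) as [xa Ha].
  destruct (proj2 (Hidx b) (or_intror eq_refl)) as [xb Hb].
  clear Hidx.
  destruct l as [|[x0 y0] [|[x1 y1] [|[x2 y2] [|[x3 y3] [|p5 l]]]]];
    simpl in Hlen; try (exfalso; lia); simpl in Ha, Hb, Hok |- *.
  - exfalso. destruct Ha as [[Ha _]|[]], Hb as [[Hb _]|[]]. lia.
  - exfalso. destruct Ha as [[_ [Ha _]]|[[Ha _]|[]]], Hb as [[_ [Hb _]]|[[Hb _]|[]]]; lia.
  - unfold hseg, vseg in Hok; simpl in Hok.
    assert (A : (y0 = a /\ y1 = a) \/ (y1 = a /\ y2 = a) \/ (y2 = a /\ y3 = a)) by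
      (destruct Ha as [[? [? _]]|[[? [? _]]|[[? [? _]]|[]]]]; auto).
    assert (B : (y0 = b /\ y1 = b) \/ (y1 = b /\ y2 = b) \/ (y2 = b /\ y3 = b)) by
      (destruct Hb as [[? [? _]]|[[? [? _]]|[[? [? _]]|[]]]]; auto).
    clear Ha Hb Hlen.
    destruct Hok as [H01 [I12 [H12 [I23 [H23 _]]]]].
    destruct H01 as [[e01 n01]|[e01 n01]].
    + destruct (proj1 I12 (conj e01 n01)) as [e12 n12].
      assert (H23' : y2 = y3 /\ x2 <> x3).
      { destruct H23 as [h|[h1 h2]]; auto. exfalso. apply n12. apply I23; split; auto. }
      destruct H23' as [e23 n23]. clear I12 I23 H12 H23.
      subst y1 x2 y3.
      destruct (Z.eq_dec y0 a) as [E0|E0].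
      * assert (y2 = b) by (clear - A B hab E0 n12; lia). subst.
        split; [auto|split;[auto|]].
        intros [x y|x y]; simpl; split; intros; lia.
      * assert (y2 = a /\ y0 = b) as [? ?] by (clear - A B hab E0 n12; lia). subst.
        split; [auto|split;[auto|]].
        intros [x y|x y]; simpl; split; intros; lia.
    + exfalso.
      assert (y1 = y2) as e12.
      { destruct H12 as [[h _]|h]; auto. exfalso. apply n01. apply I12 in h. apply h. }
      clear - A B hab e12 n01.
      assert (y2 <> y3 \/ y2 = y3) as [h|h] by lia; lia.
Qed.

Definition lo (c t : Z) : Z := if Z.ltb c t then 3 * c else 3 * t + 1.
Definition hi (c t : Z) : Z := if Z.ltb c t then 3 * t - 1 else 3 * c.

Definition Iv (c t : Z) : R * R := (IZR (lo c t), IZR (hi c t)).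

Lemma lohi (c t : Z) : t <> c -> lo c t <= hi c t.
Proof. unfold lo, hi; destruct (Z.ltb_spec c t); lia. Qed.

Lemma meetZ (l1 r1 l2 r2 : Z) :
  intervals_meet (IZR l1, IZR r1) (IZR l2, IZR r2) <-> (l1 <= r2 /\ l2 <= r1 /\ l1 <= r1 /\ l2 <= r2).
Proof.
  unfold intervals_meet; simpl; split.
  - intros [t [[h1 h2] [h3 h4]]].
    assert (IZR l1 <= IZR r2)%R by lra.
    assert (IZR l2 <= IZR r1)%R by lra.
    assert (IZR l1 <= IZR r1)%R by lra.
    assert (IZR l2 <= IZR r2)%R by lra.
    apply le_IZR in H, H0, H1, H2. lia.
  - intros [h1 [h2 [h3 h4]]]. exists (IZR (Z.max l1 l2)).
    repeat split; apply IZR_le; lia.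
Qed.

Lemma track (c1 t1 c2 t2 : Z) : t1 <> c1 -> t2 <> c2 ->
  ((lo c1 t1 <= hi c2 t2 /\ lo c2 t2 <= hi c1 t1 /\ lo c1 t1 <= hi c1 t1 /\ lo c2 t2 <= hi c2 t2)
  <-> (c1 = c2 \/ exists x, Z.min c1 t1 <= x < Z.max c1 t1 /\ Z.min c2 t2 <= x < Z.max c2 t2)).
Proof.
  intros n1 n2. unfold lo, hi.
  destruct (Z.ltb_spec c1 t1), (Z.ltb_spec c2 t2); split.
  all: try (intros [h|[x h]]; lia).
  all: intros h; destruct (Z.eq_dec c1 c2); [now left|right];
       exists (Z.max (Z.min c1 t1) (Z.min c2 t2)); lia.
Qed.

Lemma shared (a b c1 a1 b1 c2 a2 b2 : Z) : a <> b ->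
  a1 <> c1 -> b1 <> c1 -> a2 <> c2 -> b2 <> c2 ->
  (exists e, Dd a b (c1, a1, b1) e /\ Dd a b (c2, a2, b2) e) <->
  ((c1 = c2 \/ exists x, Z.min c1 a1 <= x < Z.max c1 a1 /\ Z.min c2 a2 <= x < Z.max c2 a2)
   \/ (c1 = c2 \/ exists x, Z.min c1 b1 <= x < Z.max c1 b1 /\ Z.min c2 b2 <= x < Z.max c2 b2)).
Proof.
  intros hab h1 h2 h3 h4; split.
  - intros [[x y|x y] [d1 d2]]; simpl in d1, d2.
    + destruct d1 as [[? ?]|[? ?]], d2 as [[? ?]|[? ?]]; subst.
      * left; right; exists x; auto.
      * exfalso; auto.
      * exfalso; auto.
      * right; right; exists x; auto.
    + left; left; lia.
  - intros [[E|[x [? ?]]]|[E|[x [? ?]]]].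
    + exists (VE c1 (Z.min a b)); simpl; lia.
    + exists (HE x a); simpl; auto.
    + exists (VE c1 (Z.min a b)); simpl; lia.
    + exists (HE x b); simpl; auto.
Qed.

Theorem lemma3 (V : Type) (E : V -> V -> Prop) (P : V -> list point)
  (Vfin : exists l : list V, forall v, In v l)
  (Esym : forall u v, E u v -> E v u)
  (Eirr : forall u, ~ E u u)
  (rep : B2_EPG_rep E P) (a b : Z) (hab : a <> b) :
  two_track_interval_induced E (fun v => index_is_pair (P v) a b).
Proof.
  destruct rep as [Hp He].
  exists (fun v => let '(c, ta, tb) := desc a (P v) in Iv c ta).
  exists (fun v => let '(c, ta, tb) := desc a (P v) in Iv c tb).
  split.
  - intros v Sv. pose proof (key (P v) a b hab (Hp v) Sv) as K.
    destruct (desc a (P v)) as [[c ta] tb]. destruct K as [n1 [n2 _]].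
    unfold interval_ok, Iv; simpl; split; apply IZR_le, lohi; auto.
  - intros u v Su Sv nuv.
    pose proof (key (P u) a b hab (Hp u) Su) as Ku.
    pose proof (key (P v) a b hab (Hp v) Sv) as Kv.
    destruct (desc a (P u)) as [[c1 a1] b1].
    destruct (desc a (P v)) as [[c2 a2] b2].
    destruct Ku as [n1 [n2 Ku]], Kv as [n3 [n4 Kv]].
    rewrite (He u v nuv). unfold Iv. rewrite !meetZ. rewrite !track by auto. idtac.
    rewrite <- (shared a b c1 a1 b1 c2 a2 b2 hab n1 n2 n3 n4).
    split; intros [e [h1 h2]]; exists e; split;
      try (apply Ku; exact h1); try (apply Kv; exact h2);
      try (apply Ku in h1; exact h1); try (apply Kv in h2; exact h2).
Qed.
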